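(* Let $G=(V,E)$ be a connected, locally finite graph, with arc set $A=\{(u,v):\{u,v\}\in E\}$. Let $m_V:V\to(0,\infty)$, $m_A:A\to(0,\infty)$ and $w:A\to\mathbb{C}$ be functions. Define $d$, $d^*$, $S$ and $U=S(2d^*d-1_A)$ as in the context. Suppose that one of the following two settings holds: (Setting 1) $\sum_{e\in A:\,o(e)=u}|w(e)|^2=1$ for all $u\in V$, and $m_V(u)=1$, $m_A(e)=1$ for all $u\in V$, $e\in A$; (Setting 2) $\sum_{e\in A:\,o(e)=u}w(e)=1$ for all $u\in V$, and $m_A(e)=m_V(o(e))\,w(e)=m_V(t(e))\,w(\bar e)$ for all $e\in A$. Then $U$ preserves the norm of $\ell^2(m_A;A)$: $\|U\psi\|_{m_A,A}=\|\psi\|_{m_A,A}$ for every $\psi\in\ell^2(m_A;A)$.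
   Context: For an arc $e=(u,v)\in A$, $o(e)=u$ is its origin, $t(e)=v$ its terminus, and $\bar e=(v,u)$ its inverse arc. $\ell^2(m_V;V)$ and $\ell^2(m_A;A)$ are the spaces of square-summable complex functions on $V$, resp. $A$, with inner products $\langle f_1,f_2\rangle_{m_V,V}=\sum_{u\in V}\overline{f_1(u)}f_2(u)m_V(u)$ and $\langle\psi_1,\psi_2\rangle_{m_A,A}=\sum_{e\in A}\overline{\psi_1(e)}\psi_2(e)m_A(e)$. The boundary operator is $(d\psi)(u)=\sum_{e\in A:\,t(e)=u}\overline{w(\bar e)}\,\psi(e)$, its adjoint (with respect to these inner products) is $(d^*f)(e)=f(t(e))\,m_V(t(e))\,w(\bar e)/m_A(e)$, the shift is $(S\psi)(e)=\psi(\bar e)$, and $1_A$ is the identity on functions on $A$. *)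

(* Defs.v *)
From HB Require Import structures.
From mathcomp Require Import all_boot all_order all_algebra.
From mathcomp Require Import complex.
From mathcomp Require Import all_classical all_reals all_analysis.
Set Implicit Arguments. Unset Strict Implicit. Unset Printing Implicit Defensive.
Import Order.TTheory GRing.Theory Num.Theory.
Local Open Scope ring_scope.
Local Open Scope classical_set_scope.
Local Open Scope complex_scope.

Section QuantumWalk.
Context {R : realType} {V : choiceType}.

(* A graph on V is given by its (symmetric) adjacency relation [adj];
   {u,v} is an edge iff adj u v.  Arcs are ordered pairs e = (o(e), t(e)). *)

Definition symmetric_adj (adj : V -> V -> bool) := forall u v, adj u v = adj v u.

Definition locally_finite (adj : V -> V -> bool) :=
  forall u, finite_set [set v | adj u v].

Definition graph_connected (adj : V -> V -> bool) :=
  forall u v : V, exists s : seq V, path adj u s && (last u s == v).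

Definition arcs (adj : V -> V -> bool) : set (V * V) := [set e | adj e.1 e.2].

Definition orig (e : V * V) : V := e.1.
Definition term (e : V * V) : V := e.2.
Definition inv_arc (e : V * V) : V * V := (e.2, e.1).

Definition cabs2 (z : R[i]) : R := complex.Re z ^+ 2 + complex.Im z ^+ 2.

Definition bdry (adj : V -> V -> bool) (w : V * V -> R[i]) (psi : V * V -> R[i])
  (u : V) : R[i] :=
  \sum_(v \in [set v | adj v u]) (w (inv_arc (v, u)))^* * psi (v, u).

Definition bdry_adj (mV : V -> R) (mA : V * V -> R) (w : V * V -> R[i])
  (f : V -> R[i]) (e : V * V) : R[i] :=
  f (term e) * (mV (term e))%:C * w (inv_arc e) / (mA e)%:C.

Definition shift (psi : V * V -> R[i]) (e : V * V) : R[i] := psi (inv_arc e).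

Definition Uop (adj : V -> V -> bool) (mV : V -> R) (mA : V * V -> R)
  (w : V * V -> R[i]) (psi : V * V -> R[i]) : V * V -> R[i] :=
  shift (fun e => 2 * bdry_adj mV mA w (bdry adj w psi) e - psi e).

Definition l2normA2 (adj : V -> V -> bool) (mA : V * V -> R)
  (psi : V * V -> R[i]) : \bar R :=
  (\esum_(e in arcs adj) (cabs2 (psi e) * mA e)%:E)%E.

End QuantumWalk.

(* Main.v *)
From HB Require Import structures.
From mathcomp Require Import all_boot all_order all_algebra.
From mathcomp Require Import complex.
From mathcomp Require Import all_classical all_reals all_analysis.
From mathcomp Require Import ring lra.
Require Import Defs.
Import Order.TTheory GRing.Theory Num.Theory.
Local Open Scope ring_scope.
Local Open Scope classical_set_scope.
Local Open Scope complex_scope.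

Section Loc.
Variable R : realType.

Notation cj := (@Num.conj _).
Lemma cjE (z : R[i]) : cj z = conjc z. Proof. by []. Qed.
Lemma cabs2C (z : R[i]) : (cabs2 z)%:C = z * cj z.
Proof.
rewrite cjE; case: z => a b; rewrite /cabs2 /=; apply/eqP; rewrite eq_complex /=.
apply/andP; split; apply/eqP; ring.
Qed.
Lemma cjM (x y : R[i]) : cj (x * y) = cj x * cj y. Proof. exact: rmorphM. Qed.
Lemma cjB (x y : R[i]) : cj (x - y) = cj x - cj y. Proof. exact: rmorphB. Qed.
Lemma cjV (x : R[i]) : cj (x^-1) = (cj x)^-1. Proof. exact: fmorphV. Qed.
Lemma cjK (x : R[i]) : cj (cj x) = x. Proof. by rewrite !cjE conjcK. Qed.
Lemma cjr (x : R) : cj (x%:C) = x%:C. Proof. by rewrite cjE conjc_real. Qed.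
Lemma cjS (I : Type) (s : seq I) (F : I -> R[i]) :
  cj (\sum_(i <- s) F i) = \sum_(i <- s) cj (F i).
Proof. exact: rmorph_sum. Qed.
Lemma rcS (I : Type) (s : seq I) (F : I -> R) :
  (\sum_(i <- s) F i)%:C = \sum_(i <- s) (F i)%:C.
Proof. exact: rmorph_sum. Qed.
Lemma rcM (x y : R) : (x * y)%:C = x%:C * y%:C. Proof. exact: rmorphM. Qed.
Lemma rcV (x : R) : (x^-1)%:C = (x%:C)^-1. Proof. exact: fmorphV. Qed.
Lemma cj2 : cj (2 : R[i]) = 2.
Proof. by rewrite cjE; apply/eqP; rewrite eq_complex /= addr0 oppr0 !eqxx. Qed.

Lemma local (I : eqType) (s : seq I) (a c : I -> R[i]) (m : I -> R) (M : R) :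
  (forall i, i \in s -> m i != 0) ->
  M * \sum_(i <- s) cabs2 (c i) / m i = 1 ->
  \sum_(i <- s) cabs2 (2 * ((\sum_(j <- s) cj (c j) * a j) * M%:C * c i / (m i)%:C) - a i) * m i
  = \sum_(i <- s) cabs2 (a i) * m i.
Proof.
move=> m0 K.
set S := \sum_(j <- s) cj (c j) * a j.
have SJ : cj S = \sum_(j <- s) c j * cj (a j).
  rewrite /S cjS; apply: eq_bigr => j _; by rewrite cjM cjK mulrC.
have KC : M%:C * \sum_(i <- s) c i * cj (c i) / (m i)%:C = 1.
  rewrite -[1]/(1%:C) -K rcM rcS; congr (_ * _).
  by apply: eq_big_seq => i _; rewrite rcM cabs2C rcV.
apply: complexI; rewrite !rcS.
transitivity (\sum_(i <- s) (4 * S * cj S * M%:C * (M%:C * (c i * cj (c i) / (m i)%:C))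
   - 2 * S * M%:C * (c i * cj (a i)) - 2 * cj S * M%:C * (cj (c i) * a i) + a i * cj (a i) * (m i)%:C)).
  apply: eq_big_seq => i Hi; rewrite rcM cabs2C.
  rewrite cjB !cjM cjV !cjr cj2.
  have mC : (m i)%:C != 0 by rewrite (_ : 0 = 0%:C) // (inj_eq (@complexI R)) m0.
  by field; exact: mC.
rewrite !big_split /= !sumrN -!mulr_sumr KC -SJ -/S.
rewrite [X in _ = X](eq_bigr (fun i => a i * cj (a i) * (m i)%:C)); last first.
  by move=> i _; rewrite rcM cabs2C.
ring.
Qed.

Lemma partition_arcs (V : choiceType) (adj : V -> V -> bool) (f : V * V -> \bar R) :
  (forall e, arcs adj e -> (0 <= f e)%E) ->
  (\esum_(e in arcs adj) f e)%R =
  (\esum_(u in setT) \esum_(v in [set v | adj v u]) f (v, u))%R.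
Proof.
move=> f0.
rewrite (esum_esum (I := setT) (J := fun u => [set v | adj v u]) (a := fun u v => f (v, u))); last first.
  by move=> u v _ h; apply: f0.
apply: (reindex_esum _ _ (fun k : V * V => (k.2, k.1))).
split.
- by move=> [u v] [_ /=]; rewrite /arcs /=.
- by move=> [u v] [u' v'] _ _ /= [-> ->].
- by move=> [v u] /= H; exists (u, v).
Qed.

Lemma shift_arcs (V : choiceType) (adj : V -> V -> bool) (g : V * V -> \bar R) :
  symmetric_adj adj ->
  (\esum_(e in arcs adj) g e)%R = (\esum_(e in arcs adj) g (inv_arc e))%R.
Proof.
move=> sym; apply: reindex_esum; split.
- by move=> [u v]; rewrite /arcs /= sym.
- by move=> [u v] [u' v'] _ _ /= [-> ->].
- by move=> [u v] /= H; exists (v, u) => //; rewrite /arcs /= sym.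
Qed.

End Loc.

Theorem proposition1 (R : realType) (V : choiceType) (adj : V -> V -> bool)
  (mV : V -> R) (mA : V * V -> R) (w : V * V -> R[i]) :
  symmetric_adj adj ->
  locally_finite adj ->
  graph_connected adj ->
  (forall u, 0 < mV u) ->
  (forall e, arcs adj e -> 0 < mA e) ->
  ( (* Setting 1 *)
    ((forall u, \sum_(v \in [set v | adj u v]) cabs2 (w (u, v)) = 1) /\
     (forall u, mV u = 1) /\ (forall e, arcs adj e -> mA e = 1))
  \/ (* Setting 2 *)
    ((forall u, \sum_(v \in [set v | adj u v]) w (u, v) = 1) /\
     (forall e, arcs adj e ->
        (mA e)%:C = (mV (orig e))%:C * w e /\
        (mA e)%:C = (mV (term e))%:C * w (inv_arc e))) ) ->
  forall psi : V * V -> R[i],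
    (l2normA2 adj mA psi < +oo)%E ->
    l2normA2 adj mA (Uop adj mV mA w psi) = l2normA2 adj mA psi.
Proof.
move=> sym lf _ mV0 mA0 hset psi _.
have Nsym u : [set v | adj v u] = [set v | adj u v].
  by apply: funext => v /=; rewrite sym.
have Nfin u : finite_set [set v | adj v u] by rewrite Nsym; exact: lf.
have mAsym e : arcs adj e -> mA (inv_arc e) = mA e.
  move=> ae; have ae' : arcs adj (inv_arc e) by case: e ae => u v; rewrite /arcs /= sym.
  case: hset => [[_ [_ h]]|[_ h]]; first by rewrite !h.
  apply: (@complexI R); have [h1 _] := h e ae; have [_ h2] := h _ ae'.
  by rewrite h2 h1; case: e {ae ae' h1 h2}.
rewrite /l2normA2.
set phi := fun e => 2 * bdry_adj mV mA w (bdry adj w psi) e - psi e.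
transitivity (\esum_(e in arcs adj) (cabs2 (phi e) * mA e)%:E)%R.
  rewrite [LHS]shift_arcs //; apply: eq_esum => e ae.
  by rewrite mAsym //; case: e ae.
have ge0 (g : V * V -> R[i]) : forall e, arcs adj e -> (0 <= (cabs2 (g e) * mA e)%:E)%E.
  move=> e ae; rewrite lee_fin mulr_ge0 //; last exact/ltW/mA0.
  by rewrite /cabs2 addr_ge0 // sqr_ge0.
rewrite !partition_arcs; [|exact: ge0..]. apply: eq_esum => u _ /=.
have inN v : v \in [set v | adj v u] -> adj v u by rewrite inE.
rewrite !esum_fset //; last 2 first.
- by move=> v /inN h; apply: ge0.
- by move=> v /inN h; apply: ge0.
rewrite !fsumEFin //; congr (_%:E).
rewrite !fsbig_finite //= /phi /bdry_adj /bdry /= fsbig_finite //=.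
set s := finmap.enum_fset _.
have ins v : v \in s -> adj v u.
  by rewrite /s => /[!in_fset_set (Nfin u)] /inN.
apply: (@local R V s (fun v => psi (v,u)) (fun v => w (u,v)) (fun v => mA (v,u)) (mV u)).
  by move=> v /ins h; apply: lt0r_neq0; apply: mA0.
have sumN (F : V -> R[i]) : \sum_(v \in [set v | adj u v]) F v = \sum_(v <- s) F v.
  by rewrite -Nsym fsbig_finite.
have sumNR (F : V -> R) : \sum_(v \in [set v | adj u v]) F v = \sum_(v <- s) F v.
  by rewrite -Nsym fsbig_finite.
case: hset => [[h1 [h2 h3]]|[h1 h2]].
  rewrite h2 mul1r -(h1 u) sumNR; apply: eq_big_seq => v /ins h.
  by rewrite h3 ?divr1.
have wE v : v \in s -> w (u, v) = (mA (v, u) / mV u)%:C.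
  move=> /ins h; have [_ e2] := h2 (v, u) h.
  have mVC : (mV u)%:C != 0 by rewrite (_ : 0 = 0%:C) // (inj_eq (@complexI R)) lt0r_neq0.
  rewrite rcM rcV e2 /term /inv_arc /=; field; exact: mVC.
rewrite mulr_sumr.
transitivity (\sum_(v <- s) mA (v, u) / mV u).
  apply: eq_big_seq => v hv; rewrite wE // /cabs2 /=.
  have : mA (v, u) != 0 by apply: lt0r_neq0; apply: mA0; exact: ins.
  have : mV u != 0 by apply: lt0r_neq0.
  move=> ? ?; field; apply/andP; split => //.
apply: (@complexI R); rewrite rcS (_ : 1%:C = 1) // -(h1 u) sumN; apply: eq_big_seq => v hv.
by rewrite wE.
Qed.
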